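(* Let $(J,\mathcal F)$, $b^S,w^S_j$, $P(\mathcal F)$ be as in the context with $P(\mathcal F)$ an $\mathcal F$-extended polymatroid, and let $\mathbf c$ be $\mathcal F$-admissible, with $\mathrm{AG}_2$ on input $\mathbf c$ producing $\boldsymbol\pi,\boldsymbol\nu$ and $S_k=\{\pi_k,\dots,\pi_n\}$. Define $c^{S_1}_j=c_j$ ($j\in J$) and $c^{S_k}_j=c^{S_{k-1}}_j-\frac{c^{S_{k-1}}_{\pi_{k-1}}}{w^{S_{k-1}}_{\pi_{k-1}}}[w^{S_{k-1}}_j-w^{S_k}_j]$ for $j\in S_k$, $2\le k\le n$, and let $v^{\mathrm{LP}}=\min\{\sum_jc_jx_j:\mathbf x\in P(\mathcal F)\}$. Then for $1\le m\le n-1$, $$v^{\mathrm{LP}}=\sum_{k=1}^m\nu_{\pi_k}\,[b^{S_k}-b^{S_{k+1}}]+\sum_{j\in S_{m+1}}c^{S_{m+1}}_j\,x^{\boldsymbol\pi}_j.$$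
   Context: $J$ finite, $|J|=n$; $\mathcal F\subseteq2^J$ with $\emptyset\in\mathcal F$, each nonempty $S\in\mathcal F$ having nonempty $\partial^-S=\{j\in S:S\setminus\{j\}\in\mathcal F\}$, each $S\in\mathcal F\ne J$ having $j\notin S$ with $S\cup\{j\}\in\mathcal F$. Full $\mathcal F$-string: ordering $\boldsymbol\pi$ of $J$ with $\{\pi_k,\dots,\pi_n\}\in\mathcal F$ for all $k$. Given $b^S\ge0$, $w^S_j>0$: $P(\mathcal F)=\{\mathbf x\ge0:\sum_{j\in S}w^S_jx_j\ge b^S\ (S\in\mathcal F\setminus\{J\}),\ \sum_{j\in J}w^J_jx_j=b^J\}$; $\mathbf x^{\boldsymbol\pi}$ is the unique solution of $\sum_{l=k}^nw^{S_k}_{\pi_l}x_{\pi_l}=b^{S_k}$ ($1\le k\le n$); $P(\mathcal F)$ is an $\mathcal F$-extended polymatroid if $\mathbf x^{\boldsymbol\pi}\in P(\mathcal F)$ for every full $\mathcal F$-string. $\mathrm{AG}_2$ on input $\mathbf c$: $S_1=J$, $\nu^{S_1}_j=c_j/w^{S_1}_j$, $\pi_1\in\arg\min\{\nu^{S_1}_j:j\in\partial^-S_1\}$, $\nu_{\pi_1}=\nu^{S_1}_{\pi_1}$; for $k=2..n$: $S_k=S_{k-1}\setminus\{\pi_{k-1}\}$, $\nu^{S_k}_j=\nu^{S_{k-1}}_j+(w^{S_{k-1}}_j/w^{S_k}_j-1)[\nu^{S_{k-1}}_j-\nu^{S_{k-1}}_{\pi_{k-1}}]$ ($j\in S_k$),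 $\pi_k\in\arg\min\{\nu^{S_k}_j:j\in\partial^-S_k\}$, $\nu_{\pi_k}=\nu^{S_k}_{\pi_k}$. $\mathbf c$ is $\mathcal F$-admissible if $\nu_{\pi_1}\le\cdots\le\nu_{\pi_n}$. *)

(* Defs.v *)
From mathcomp Require Import all_boot all_order all_algebra.
Set Implicit Arguments. Unset Strict Implicit. Unset Printing Implicit Defensive.
Import Order.TTheory GRing.Theory Num.Theory.
Local Open Scope ring_scope.

Section Defs.
Variables (R : realFieldType) (J : finType).

Definition boundary (F : {set {set J}}) (S : {set J}) : {set J} :=
  [set j in S | S :\ j \in F].

(* An ordering of J is given as pi : nat -> J, using indices 0 .. n-1
   (paper index k corresponds to k-1 here).
   suffS pi k = { pi_k, ..., pi_{n-1} }  (0-indexed), i.e. paper's S_{k+1}. *)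
Definition suffS (pi : nat -> J) (k : nat) : {set J} :=
  [set x in [seq pi i | i <- iota k (#|J| - k)]].

Definition is_ordering (pi : nat -> J) : Prop :=
  perm_eq [seq pi i | i <- iota 0 #|J|] (enum J).

Definition full_string (F : {set {set J}}) (pi : nat -> J) : Prop :=
  is_ordering pi /\ forall k, (k < #|J|)%N -> suffS pi k \in F.

(* x solves  sum_{l >= k} w^{S_k}_{pi_l} x_{pi_l} = b^{S_k}  for all k;
   for w > 0 this system has a unique solution, namely x^pi. *)
Definition solves_string (w : {set J} -> J -> R) (b : {set J} -> R)
  (pi : nat -> J) (x : J -> R) : Prop :=
  forall k, (k < #|J|)%N ->
    \sum_(j in suffS pi k) w (suffS pi k) j * x j = b (suffS pi k).

Definition inP (F : {set {set J}}) (w : {set J} -> J -> R) (b : {set J} -> R)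
  (x : J -> R) : Prop :=
  [/\ forall j, 0 <= x j,
      forall S, S \in F -> S != [set: J] -> b S <= \sum_(j in S) w S j * x j
    & \sum_(j : J) w [set: J] j * x j = b [set: J]].

Definition ext_polymatroid (F : {set {set J}}) (w : {set J} -> J -> R)
  (b : {set J} -> R) : Prop :=
  forall pi x, full_string F pi -> solves_string w b pi x -> inP F w b x.

Fixpoint nuS (w : {set J} -> J -> R) (c : J -> R) (pi : nat -> J)
  (k : nat) (j : J) : R :=
  match k with
  | 0 => c j / w [set: J] j
  | k'.+1 => nuS w c pi k' j
      + (w (suffS pi k') j / w (suffS pi k) j - 1)
        * (nuS w c pi k' j - nuS w c pi k' (pi k'))
  end.

Definition AG2_run (F : {set {set J}}) (w : {set J} -> J -> R) (c : J -> R)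
  (pi : nat -> J) : Prop :=
  is_ordering pi /\
  forall k, (k < #|J|)%N ->
    pi k \in boundary F (suffS pi k) /\
    forall j, j \in boundary F (suffS pi k) -> nuS w c pi k (pi k) <= nuS w c pi k j.

Definition admissible (w : {set J} -> J -> R) (c : J -> R) (pi : nat -> J) : Prop :=
  forall k, (k.+1 < #|J|)%N -> nuS w c pi k (pi k) <= nuS w c pi k.+1 (pi k.+1).

Fixpoint cS (w : {set J} -> J -> R) (c : J -> R) (pi : nat -> J)
  (k : nat) (j : J) : R :=
  match k with
  | 0 => c j
  | k'.+1 => cS w c pi k' j
      - cS w c pi k' (pi k') / w (suffS pi k') (pi k')
        * (w (suffS pi k') j - w (suffS pi k) j)
  end.

End Defs.

(* Main.v *)
Require Import Defs.
From mathcomp Require Import all_boot all_order all_algebra.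
From mathcomp Require Import ring lra zify.
Import Order.TTheory GRing.Theory Num.Theory.
Local Open Scope ring_scope.

Section Aux.
Variable J : finType.
Implicit Type pi : nat -> J.

Lemma memS pi k x :
  reflect (exists2 i, (k <= i < #|J|)%N & x = pi i) (x \in suffS pi k).
Proof.
rewrite inE; apply: (iffP mapP) => [[i]|[i]]; [rewrite mem_iota => Hi -> | move=> Hi ->];
  exists i => //; rewrite ?mem_iota; lia.
Qed.

Lemma ord_inj pi : is_ordering pi -> forall i i', (i < #|J|)%N -> (i' < #|J|)%N ->
  pi i = pi i' -> i = i'.
Proof.
move=> Ho i i' Hi Hi' E.
have U : uniq [seq pi i | i <- iota 0 #|J|] by rewrite (perm_uniq Ho) enum_uniq.
have := nth_uniq (pi 0%N) _ _ U; rewrite size_map size_iota => /(_ i i' Hi Hi').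
rewrite !(nth_map 0%N) ?size_iota // !nth_iota // !add0n E eqxx => /esym/eqP //.
Qed.

Lemma S0 pi : is_ordering pi -> suffS pi 0 = [set: J].
Proof.
move=> Ho; apply/setP => x; rewrite inE in_setT subn0 (perm_mem Ho) mem_enum //.
Qed.

Lemma Sn pi : suffS pi #|J| = set0.
Proof. by apply/setP => x; rewrite inE in_set0 subnn. Qed.

Lemma Ssucc pi k : (k < #|J|)%N -> suffS pi k = pi k |: suffS pi k.+1.
Proof.
move=> Hk; apply/setP => x; rewrite in_setU1.
apply/memS/orP => [[i Hi ->]|[/eqP ->|/memS [i Hi ->]]].
- case: (ltnP k i) => H; [right; apply/memS; exists i => //; lia|].
  left; have -> : i = k by lia. by [].
- by exists k => //; lia.
- by exists i => //; lia.
Qed.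

Lemma notinS pi k : is_ordering pi -> (k < #|J|)%N -> pi k \notin suffS pi k.+1.
Proof.
move=> Ho Hk; apply/memS => [[i Hi E]].
have Hi2 : (i < #|J|)%N by case/andP: Hi.
have := @ord_inj pi Ho _ _ Hk Hi2 E; lia.
Qed.

Lemma pi0notin pi k : is_ordering pi -> (0 < #|J|)%N -> (0 < k)%N -> pi 0%N \notin suffS pi k.
Proof.
move=> Ho Hn Hk; apply/memS => [[i Hi E]].
have Hi2 : (i < #|J|)%N by case/andP: Hi.
have := @ord_inj pi Ho _ _ Hn Hi2 E; lia.
Qed.

Lemma subS pi k : (suffS pi k.+1 \subset suffS pi k).
Proof. by apply/subsetP => x /memS [i Hi ->]; apply/memS; exists i => //; lia. Qed.

End Aux.
Arguments S0 {J pi} _.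
Arguments Sn {J} pi.
Arguments Ssucc {J} pi {k} _.
Arguments notinS {J pi k} _ _.
Arguments subS {J} pi k.
Arguments pi0notin {J pi k} _ _ _.

Theorem proposition1 (R : realFieldType) (J : finType) (F : {set {set J}})
  (w : {set J} -> J -> R) (b : {set J} -> R) (c : J -> R)
  (pi : nat -> J) (xpi : J -> R) (m : nat) :
  set0 \in F ->
  (forall S, S \in F -> S != set0 -> boundary F S != set0) ->
  (forall S, S \in F -> S != [set: J] ->
     exists j, j \notin S /\ S :|: [set j] \in F) ->
  (forall S, S \in F -> 0 <= b S) ->
  (forall S j, S \in F -> j \in S -> 0 < w S j) ->
  ext_polymatroid F w b ->
  AG2_run F w c pi ->
  admissible w c pi ->
  solves_string w b pi xpi ->
  (1 <= m <= #|J|.-1)%N ->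
  let V := \sum_(0 <= k < m) (nuS w c pi k (pi k))
               * (b (suffS pi k) - b (suffS pi k.+1))
           + \sum_(j in suffS pi m) cS w c pi m j * xpi j in
  (exists y, inP F w b y /\ \sum_(j : J) c j * y j = V) /\
  (forall y, inP F w b y -> V <= \sum_(j : J) c j * y j).
Proof.
move=> H0 Hbd Hext Hb Hw Hpoly [Ho Hrun] Hadm Hsol Hm V.
have Hn : (1 < #|J|)%N by lia.
have JF : [set: J] \in F.
  case: (@arg_maxnP _ set0 (fun S => S \in F) (fun S => #|S|) H0) => S SF Smax.
  apply: contraT => NJ.
  have SJ : S != setT by apply: contraNneq NJ => <-.
  case: (Hext S SF SJ) => j [jS Sj].
  have := Smax _ Sj; rewrite setUC cardsU1 jS /=; lia.
have SF : forall k, (k <= #|J|)%N -> suffS pi k \in F.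
  case=> [|k] Hk; first by rewrite S0.
  have [/setIdP [_ H] _] := Hrun k Hk.
  by move: H; rewrite (Ssucc pi Hk) setU1K // notinS.
have wpos : forall k j, (k <= #|J|)%N -> j \in suffS pi k -> 0 < w (suffS pi k) j.
  by move=> k j Hk Hj; apply: Hw => //; apply: SF.
have wnz : forall k j, (k <= #|J|)%N -> j \in suffS pi k -> w (suffS pi k) j != 0.
  by move=> k j Hk Hj; rewrite gt_eqF // wpos.
have pikin : forall k, (k < #|J|)%N -> pi k \in suffS pi k.
  by move=> k Hk; rewrite (Ssucc pi Hk) setU11.
have inv : forall k, (k < #|J|)%N -> forall j, j \in suffS pi k ->
    cS w c pi k j = w (suffS pi k) j * nuS w c pi k j.
  elim=> [|k IH] Hk j Hj /=.
    have := wnz 0%N j (leq0n _) Hj; rewrite S0 // => Hw0; field; exact: Hw0.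
  have Hk' : (k < #|J|)%N by lia.
  have Hjk : j \in suffS pi k by apply: (subsetP (subS pi k)).
  rewrite !IH //; [|exact: pikin].
  have := wnz k.+1 j (ltnW Hk) Hj; have := wnz k (pi k) (ltnW Hk') (pikin k Hk').
  move=> h1 h2; field; rewrite h1 h2 //.
pose mu k := cS w c pi k (pi k) / w (suffS pi k) (pi k).
have mu_nu : forall k, (k < #|J|)%N -> mu k = nuS w c pi k (pi k).
  move=> k Hk; rewrite /mu inv //; last exact: pikin.
  have := wnz k (pi k) (ltnW Hk) (pikin k Hk) => h; field; exact: h.
pose G (y : J -> R) k := \sum_(j in suffS pi k) w (suffS pi k) j * y j.
pose E (y : J -> R) k := \sum_(j in suffS pi k) cS w c pi k j * y j.
have rec : forall y k, (k < #|J|)%N -> E y k = E y k.+1 + mu k * (G y k - G y k.+1).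
  move=> y k Hk.
  have split : forall f : J -> R, \sum_(j in suffS pi k) f j
      = f (pi k) + \sum_(j in suffS pi k.+1) f j.
    by move=> f; rewrite {1}(Ssucc pi Hk) big_setU1 // notinS.
  rewrite /E /G !split.
  have Hc : cS w c pi k (pi k) = mu k * w (suffS pi k) (pi k).
    rewrite /mu; have := wnz k (pi k) (ltnW Hk) (pikin k Hk) => h; field; exact: h.
  have -> : \sum_(j in suffS pi k.+1) cS w c pi k j * y j =
     \sum_(j in suffS pi k.+1) cS w c pi k.+1 j * y j +
     mu k * (\sum_(j in suffS pi k.+1) w (suffS pi k) j * y j
             - \sum_(j in suffS pi k.+1) w (suffS pi k.+1) j * y j).
    rewrite mulrBr !mulr_sumr -sumrB -big_split; apply: eq_bigr => j _ /=.
    rewrite /mu; ring.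
  rewrite Hc; ring.
have tele : forall y m, (m <= #|J|)%N ->
    E y 0%N = \sum_(0 <= k < m) mu k * (G y k - G y k.+1) + E y m.
  move=> y; elim=> [|k IH] Hk; first by rewrite big_geq // add0r.
  rewrite big_nat_recr //= IH 1?ltnW // (rec _ k) //; ring.
have cx : forall y, \sum_(j : J) c j * y j = E y 0%N.
  move=> y; rewrite /E S0 //; apply: eq_bigl => j; by rewrite in_setT.
have G0 : forall y, G y 0%N = \sum_(j : J) w [set: J] j * y j.
  move=> y; rewrite /G S0 //; apply: eq_bigl => j; by rewrite in_setT.
have xin : inP F w b xpi.
  apply: Hpoly Hsol; split => // k Hk; exact: SF (ltnW Hk).
have Vx : V = \sum_(j : J) c j * xpi j.
  rewrite cx (tele xpi m); last lia.
  congr (_ + _); apply: eq_big_nat => k Hk.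
  rewrite mu_nu; last lia.
  rewrite /G !Hsol //; lia.
split; first by exists xpi; split.
move=> y yin; rewrite Vx !cx.
have key : forall d, (d <= #|J|)%N ->
    mu (#|J| - d)%N * (G y (#|J| - d)%N - G xpi (#|J| - d)%N)
      <= E y (#|J| - d)%N - E xpi (#|J| - d)%N.
  elim=> [|d IH] Hd.
    by rewrite subn0 /G /E Sn !big_set0 subrr mulr0.
  have Hk : (#|J| - d.+1 < #|J|)%N by lia.
  have E1 : (#|J| - d.+1).+1 = (#|J| - d)%N by lia.
  rewrite !(rec _ _ Hk) E1.
  have IH' := IH (ltnW Hd).
  have nonneg : 0 <= (mu (#|J| - d)%N - mu (#|J| - d.+1)%N)
                       * (G y (#|J| - d)%N - G xpi (#|J| - d)%N).
    case: (ltnP 0 d) => Hd0.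
      apply: mulr_ge0.
        rewrite subr_ge0 !mu_nu; [|lia|lia].
        have := Hadm (#|J| - d.+1)%N; rewrite E1; apply; lia.
      have -> : G xpi (#|J| - d)%N = b (suffS pi (#|J| - d)) by apply: Hsol; lia.
      rewrite subr_ge0.
      case: yin => _ Hy _; apply: Hy; first by apply: SF; lia.
      apply/eqP => Eq.
      have : (0 < #|J| - d)%N by lia.
      by move/(@pi0notin J pi (#|J| - d)%N Ho (ltnW Hn)); rewrite Eq in_setT.
    have -> : d = 0%N by lia.
    by rewrite subn0 /G Sn !big_set0 subrr mulr0.
  nra.
have := key #|J| (leqnn _); rewrite subnn G0 G0.
case: yin => _ _ ->; case: xin => _ _ ->.
rewrite subrr mulr0 subr_ge0 //.
Qed.
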